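(* Let $G$ be a $2$-connected cubic multigraph, let $H$ be a peninsula of $G$ with internal port $p$, let $C$ be a core of $H$, and let $e\neq p$ be an edge of $C$. Then for every endpoint $x$ of $p$ there exists a path in $C$ that starts at $x$, does not use $p$, and has $e$ as its last edge.
   Context: Multigraphs are finite and loopless, parallel edges allowed; paths in $C$ may use virtual edges of $C$. A cut of a multigraph $M$ is a bipartition $(U,V(M)\setminus U)$; its cut-set is the set of edges between the sides. A tombolo-cut is a cut whose cut-set (tombolo) has exactly $2$ edges. For a tombolo-cut of $G$ with tombolo $\{a_1b_1,a_2b_2\}$, $a_1,a_2\in U$, the pairs $\{a_1,a_2\}$, $\{b_1,b_2\}$ are its port-pairs. A virtual subgraph of $G$ (on vertex set $X\subseteq V(G)$) is the multigraph on $X$ whose edges are all edges of $G$ with both ends in $X$ (real edges) plus one (possibly parallel) virtual edge $ab$ for every port-pair $\{a,b\}\subseteq X$ of a tombolo of $G$ both of whose edges are not edges of $G$ inside $X$. A peninsula is a virtual subgraph $H$ such that $(V(H),V(G)\setminus V(H))$ is a tombolo-cut, or $H=G$. The internal port of a peninsula $H\ne G$ is its unique virtual edge; if $H=G$ an arbitrary edge is fixed as internal port. A core of a peninsula $H$ with internal port $p=xy$ is obtained as follows: set $C_1=H$; while $C_i$ has a cut $(U,V(C_i)\setminus U)$ whose cut-set (in $C_i$) has exactly $2$ edges, neither of which is $p$, let $C_{i+1}$ be the virtual subgraph of $G$ on $U$ if $\{x,y\}\subseteq U$, and on $V(C_i)\setminus U$ otherwise; when no such cut exists, the current $C_i$ is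 a core. *)

(* Defs.v *)
From mathcomp Require Import all_boot.
Set Implicit Arguments. Unset Strict Implicit. Unset Printing Implicit Defensive.

Section Multigraph.
Variables (V E : finType) (ends : E -> V * V).

Definition endsG (e : E) : {set V} := [set (ends e).1; (ends e).2].

Definition loopless : Prop := forall e : E, (ends e).1 != (ends e).2.

(* every vertex is incident with exactly 3 edges (G loopless, so degree) *)
Definition cubic : Prop := forall v : V, #|[set e : E | v \in endsG e]| = 3.

Definition adjIn (W : {set V}) : rel V :=
  fun u w => [&& u \in W, w \in W & [exists e : E, (u \in endsG e) && (w \in endsG e)]].

Definition connectedIn (W : {set V}) : Prop :=
  forall u w, u \in W -> w \in W -> connect (adjIn W) u w.

Definition two_connected : Prop :=
  1 < #|V| /\ connectedIn [set: V] /\ forall v : V, connectedIn [set~ v].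

Definition crosses (U A : {set V}) : bool := (A :&: U != set0) && (A :\: U != set0).

Definition cutsetG (U : {set V}) : {set E} := [set e : E | crosses U (endsG e)].

Definition tombolo_cut (U : {set V}) : bool := #|cutsetG U| == 2.

Definition portpair (S : {set E}) (P : {set V}) : bool :=
  [exists U : {set V},
     [&& cutsetG U == S, #|S| == 2 &
         P == [set v in U | [exists f in S, v \in endsG f]]]].

(* Universe of edges: real edges of G, and virtual edges indexed by
   (tombolo, port-pair). *)
Definition Edge := (E + ({set E} * {set V}))%type.

Definition endset (f : Edge) : {set V} :=
  match f with inl e => endsG e | inr SP => SP.2 end.

Definition is_virtual (f : Edge) : bool := if f is inr _ then true else false.

Definition vsub (X : {set V}) : {set Edge} :=
  [set f : Edge | match f with
                  | inl e => endsG e \subset X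
                  | inr SP => [&& portpair SP.1 SP.2, SP.2 \subset X &
                                  [forall g in SP.1, ~~ (endsG g \subset X)]]
                  end].

Definition cutsetIn (X U : {set V}) : {set Edge} :=
  [set f in vsub X | crosses U (endset f)].

(* peninsula: the virtual subgraph on X, where (X, V\X) is a tombolo-cut or X = V(G)
   (the virtual subgraph of G on V(G) is G itself) *)
Definition peninsula (X : {set V}) : bool := tombolo_cut X || (X == [set: V]).

Definition internal_port (X : {set V}) (p : Edge) : Prop :=
  if X == [set: V] then is_true (p \in vsub X)
  else [/\ p \in vsub X, is_virtual p &
           forall q, q \in vsub X -> is_virtual q -> q = p].

(* core_of p X Y : the virtual subgraph on Y is a core obtainable from the
   virtual subgraph on X by the reduction process w.r.t. internal port p *)
Inductive core_of (p : Edge) : {set V} -> {set V} -> Prop :=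
| core_stop (X : {set V}) :
    (forall U : {set V}, U \subset X -> #|cutsetIn X U| = 2 -> p \in cutsetIn X U) ->
    core_of p X X
| core_step (X U Y : {set V}) :
    U \subset X -> #|cutsetIn X U| = 2 -> p \notin cutsetIn X U ->
    core_of p (if endset p \subset U then U else X :\: U) Y ->
    core_of p X Y.

Definition is_path (Y : {set V}) (vs : seq V) (es : seq Edge) : Prop :=
  [/\ size vs = (size es).+1, uniq vs,
      all (fun f => f \in vsub Y) es &
      forall (v0 : V) (f0 : Edge) (i : nat), i < size es ->
        endset (nth f0 es i) = [set nth v0 vs i; nth v0 vs i.+1]].

End Multigraph.

(* Main.v *)
Require Import Defs.
From mathcomp Require Import all_boot.
Set Implicit Arguments. Unset Strict Implicit. Unset Printing Implicit Defensive.

Lemma first_hit (T : finType) (r : rel T) (A : {set T}) (x t : T) :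
  connect r x t -> t \in A ->
  exists2 t', t' \in A & connect (fun u v => (u \notin A) && r u v) x t'.
Proof.
move/connectP => [s + ->]; elim: s x => [|y s IH] x /=; first by move=> _ tA; exists x.
move=> /andP[rxy ps] tA.
case: (boolP (x \in A)) => xA; first by exists x.
have [t' t'A ct'] := IH y ps tA; exists t' => //.
by apply: connect_trans ct'; apply: connect1; rewrite /= xA.
Qed.

Lemma belast_notin (T : finType) (r : rel T) (A : {set T}) (x : T) (s : seq T) :
  path (fun u v => (u \notin A) && r u v) x s -> forall v, v \in belast x s -> v \notin A.
Proof.
elim: s x => [|y s IH] x //= /andP[/andP[xA _] ps] v.
by rewrite in_cons => /orP[/eqP->//|]; exact: IH.
Qed.

Section S.
Variables (V E : finType) (ends : E -> V * V).
Hypothesis Hloop : loopless ends.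
Hypothesis Hcub : cubic ends.
Hypothesis H2c : two_connected ends.

Lemma crossesP (U A : {set V}) :
  reflect ((exists2 v, v \in A & v \in U) /\ (exists2 v, v \in A & v \notin U))
          (crosses U A).
Proof.
rewrite /crosses; apply: (iffP andP) =>
  [[/set0Pn[v /setIP[? ?]] /set0Pn[w /setDP[? ?]]]|[[v ? ?] [w ? ?]]]; split.
- by exists v.
- by exists w.
- by apply/set0Pn; exists v; apply/setIP.
- by apply/set0Pn; exists w; apply/setDP.
Qed.

Lemma pair2 (a b c d : V) : a != b -> a \in [set c; d] -> b \in [set c; d] ->
  [set c; d] = [set a; b].
Proof.
move=> nab; rewrite !in_set2 => /orP[]/eqP Ha /orP[]/eqP Hb; subst;
  rewrite ?eqxx // in nab; by rewrite setUC.
Qed.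

Lemma cross_ends (U : {set V}) (s : E) : s \in cutsetG ends U ->
  exists u w, [/\ u \in U, w \notin U & endsG ends s = [set u; w]].
Proof.
rewrite inE => /crossesP[[u uA uU] [w wA wU]].
exists u, w; split => //.
have nuw : u != w by apply: contraNneq wU => <-.
by rewrite /endsG (pair2 nuw uA wA).
Qed.

Lemma cutsetG_compl (U : {set V}) : cutsetG ends (~: U) = cutsetG ends U.
Proof.
apply/setP => s; rewrite !inE.
apply/crossesP/crossesP => [[[v vA vU] [w wA wU]]|[[v vA vU] [w wA wU]]]; split.
- by exists w; rewrite // inE negbK in wU.
- by exists v; rewrite // inE in vU.
- by exists w; rewrite // inE.
- by exists v; rewrite // inE negbK.
Qed.

Lemma connect_cross (W Z : {set V}) (u w : V) : connect (adjIn ends W) u w -> u \in Z -> w \notin Z ->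
  exists g, g \in cutsetG ends Z /\ endsG ends g \subset W.
Proof.
move/connectP=> [s + ->]; elim: s u => [|y s IH] u /=; first by move=> _ ->.
move=> /andP[Huy Hp] Hu Hw.
case Hy: (y \in Z); first exact: IH Hp Hy Hw.
move: Huy => /and3P[HuW HyW /existsP[g /andP[Hug Hyg]]].
exists g; split.
  by rewrite inE; apply/crossesP; split; [exists u|exists y] => //; rewrite Hy.
have nuy : u != y by apply: contraTneq Hu => ->; rewrite Hy.
rewrite /endsG (pair2 nuy Hug Hyg).
by apply/subsetP => v; rewrite in_set2 => /orP[]/eqP->.
Qed.

Lemma key_cut (Z : {set V}) (a b : V) : a \in Z -> b \notin Z ->
  (forall g, g \in cutsetG ends Z -> a \in endsG ends g) ->
  #|cutsetG ends Z| < 3 -> False.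
Proof.
move=> aZ bZ Hall Hc.
case: (boolP (Z == [set a])) => [/eqP HZ|HZ].
  have: [set g | a \in endsG ends g] \subset cutsetG ends Z.
    apply/subsetP => g Ha; rewrite in_set in Ha; rewrite in_set; apply/crossesP; split.
      by exists a.
    have := Hloop g; move: Ha; rewrite /endsG in_set2 => /orP[]/eqP Ha Hne.
      exists (ends g).2; first by rewrite in_set2 eqxx orbT.
      by rewrite HZ inE Ha eq_sym.
    exists (ends g).1; first by rewrite in_set2 eqxx.
    by rewrite HZ inE Ha.
  move/subset_leq_card; rewrite Hcub => H3.
  by have := leq_ltn_trans H3 Hc; rewrite ltnn.
have : Z :\ a != set0.
  apply: contra HZ => /eqP H0; apply/eqP/setP => v; rewrite inE.
  apply/idP/eqP => [vZ|->//]; apply/eqP; apply: contraT => va.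
  have : v \in Z :\ a by rewrite !inE va vZ.
  by rewrite H0 inE.
case/set0Pn => w /setD1P[wa wZ].
case: H2c => _ [_ Hc2].
have ba : b != a by apply: contraNneq bZ => ->.
have wa' : w \in [set~ a] by rewrite !inE.
have ba' : b \in [set~ a] by rewrite !inE.
have [g [gc gs]] := connect_cross (Hc2 a w b wa' ba') wZ bZ.
by have := subsetP gs a (Hall g gc); rewrite !inE eqxx.
Qed.

Lemma tec (Z : {set V}) (z b : V) : z \in Z -> b \notin Z -> #|cutsetG ends Z| <= 1 -> False.
Proof.
move=> zZ bZ Hc.
case: H2c => _ [Hc1 _].
have [g [gc _]] := connect_cross (Hc1 z b (in_setT _) (in_setT _)) zZ bZ.
have : #|cutsetG ends Z| == 1.
  by rewrite eqn_leq Hc /=; apply/card_gt0P; exists g.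
case/cards1P => g' Hg'.
have gg : g = g' by move: gc; rewrite Hg' inE => /eqP.
move: (gc); rewrite inE => /crossesP[[a aA aZ] _].
apply: (key_cut aZ bZ) => [g0|]; last by rewrite (leq_ltn_trans Hc).
by rewrite Hg' inE => /eqP->; rewrite -gg.
Qed.


Lemma vsub_endset (Y : {set V}) (f : Edge V E) : f \in vsub ends Y -> endset ends f \subset Y.
Proof. by rewrite inE; case: f => [g|[S P]] //= /and3P[]. Qed.

Lemma vsub_sub (W X : {set V}) (f : Edge V E) : W \subset X -> f \in vsub ends X ->
  endset ends f \subset W -> f \in vsub ends W.
Proof.
case: f => [g|[S P]]; rewrite !inE /= => sWX; first by move=> _ ->.
move=> /and3P[pp _ /forallP Hall] sPW; rewrite pp sPW /=.
apply/forallP => g; apply/implyP => gS; move: (Hall g); rewrite gS /=.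
by apply: contra => sub; exact: subset_trans sub sWX.
Qed.

Lemma vsub_pair (Y : {set V}) (f : Edge V E) : f \in vsub ends Y ->
  exists a b, a != b /\ endset ends f = [set a; b].
Proof.
case: f => [g|[S P]] /=.
  by move=> _; exists (ends g).1, (ends g).2; split => //; apply: Hloop.
rewrite inE /= => /and3P[/existsP[U /and3P[/eqP HU HS /eqP HP]] _ _].
case/cards2P: (HS) => s1 [s2 [ns HS2]].
have s1c : s1 \in cutsetG ends U by rewrite HU HS2 !inE eqxx.
have s2c : s2 \in cutsetG ends U by rewrite HU HS2 !inE eqxx orbT.
have [u1 [w1 [u1U w1U E1]]] := cross_ends s1c.
have [u2 [w2 [u2U w2U E2]]] := cross_ends s2c.
have HP' : P = [set u1; u2].
  rewrite HP; apply/setP => v; rewrite in_set in_set2.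
  apply/andP/idP => [[vU /existsP[g /andP[]]]|].
    rewrite HS2 in_set2 => /orP[]/eqP-> ; [rewrite E1|rewrite E2];
      rewrite in_set2 => /orP[]/eqP vE; subst v; rewrite ?eqxx ?orbT //;
      by [rewrite (negbTE w1U) in vU | rewrite (negbTE w2U) in vU].
  case/orP=> /eqP->; split => //; apply/existsP; [exists s1|exists s2];
    rewrite HS2 in_set2 eqxx ?orbT /=. all: try (rewrite E1 in_set2 eqxx //). all: try (rewrite E2 in_set2 eqxx //).
exists u1, u2; split => //.
apply/negP => /eqP e12; subst u2.
apply: (key_cut u1U w1U) => [g|]; last by rewrite HU (eqP HS).
rewrite HU HS2 in_set2 => /orP[]/eqP->; [rewrite E1|rewrite E2]; rewrite in_set2 eqxx //.
Qed.

Definition ports (Q : {set V}) : {set V} :=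
  [set v in ~: Q | [exists f in cutsetG ends Q, v \in endsG ends f]].

Definition qedge (Q : {set V}) : Edge V E := inr (cutsetG ends Q, ports Q).

Definition pockets (Y : {set V}) (F : {set {set V}}) : Prop :=
  [/\ (forall Q, Q \in F -> Q \subset ~: Y),
      (forall Q Q' v, Q \in F -> Q' \in F -> v \in Q -> v \in Q' -> Q = Q'),
      (forall v, v \notin Y -> exists2 Q, Q \in F & v \in Q),
      (forall Q, Q \in F -> #|cutsetG ends Q| = 2) &
      (forall Q, Q \in F -> ports Q \subset Y)].

Definition lift (F : {set {set V}}) (Z : {set V}) : {set V} :=
  [set v | (v \in Z) || [exists Q in F, (v \in Q) && (ports Q :&: Z != set0)]].

Lemma lift_in (Y : {set V}) (F : {set {set V}}) (Z : {set V}) (v : V) : pockets Y F -> Z \subset Y -> v \in Y ->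
  (v \in lift F Z) = (v \in Z).
Proof.
case=> H1 _ _ _ _ sZY vY; rewrite inE; case: (v \in Z) => //=.
apply/existsP => -[Q /and3P[QF vQ _]].
by have := subsetP (H1 Q QF) v vQ; rewrite inE vY.
Qed.

Lemma lift_Q (Y : {set V}) (F : {set {set V}}) (Z Q : {set V}) (v : V) : pockets Y F -> Z \subset Y -> Q \in F -> v \in Q ->
  (v \in lift F Z) = (ports Q :&: Z != set0).
Proof.
case=> H1 H2 _ _ _ sZY QF vQ; rewrite inE.
have vY : v \notin Y by have := subsetP (H1 Q QF) v vQ; rewrite inE.
have -> : (v \in Z) = false by apply/negbTE; apply: contra vY; apply: (subsetP sZY).
apply/existsP/idP => [[Q' /and3P[Q'F vQ' H]]|H]; last by exists Q; rewrite QF vQ H.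
by rewrite (H2 Q Q' v).
Qed.

Lemma qedge_vsub (Y : {set V}) (F : {set {set V}}) (Q : {set V}) : pockets Y F -> Q \in F -> qedge Q \in vsub ends Y.
Proof.
case=> H1 _ _ H4 H5 QF; rewrite inE /=; apply/and3P; split.
- apply/existsP; exists (~: Q); rewrite cutsetG_compl eqxx H4 //=.
- exact: H5.
- apply/forallP => g; apply/implyP => gc.
  have [u [w [uQ _ Eg]]] := cross_ends gc.
  apply/negP => sub; have := subsetP sub u; rewrite Eg !inE eqxx => /(_ isT) uY.
  by have := subsetP (H1 Q QF) u uQ; rewrite inE uY.
Qed.

Lemma edge_ports (Q : {set V}) (g : E) (u w : V) : endsG ends g = [set u; w] ->
  u \in Q -> w \notin Q -> g \in cutsetG ends Q /\ w \in ports Q.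
Proof.
move=> Eg uQ wQ.
have gQ : g \in cutsetG ends Q.
  rewrite in_set Eg; apply/crossesP; split; [exists u|exists w] => //;
    by rewrite in_set2 eqxx ?orbT.
split => //; rewrite in_set in_setC wQ /=; apply/existsP; exists g.
by rewrite gQ Eg in_set2 eqxx orbT.
Qed.

Lemma lift_cases (Y : {set V}) (F : {set {set V}}) (Z : {set V}) (g : E) :
  pockets Y F -> Z \subset Y -> g \in cutsetG ends (lift F Z) ->
  (endsG ends g \subset Y /\ crosses Z (endsG ends g)) \/
  (exists Q u w, ([/\ Q \in F, u \in Q, w \in Y & w \notin Z] /\
                     endsG ends g = [set u; w] /\ ports Q :&: Z != set0)).
Proof.
move=> pk sZY gc; have [H1 H2 H3 H4 H5] := pk.
have [u [w [uL wL Eg]]] := cross_ends gc.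
case: (boolP (w \in Y)) => wY; last first.
  exfalso; have [Q QF wQ] := H3 w wY.
  move: wL; rewrite (lift_Q pk sZY QF wQ) negbK => HQ.
  case: (boolP (u \in Q)) => uQ.
    by move: uL; rewrite (lift_Q pk sZY QF uQ) HQ.
  have Eg' : endsG ends g = [set w; u] by rewrite Eg setUC.
  have [gQ uP] := edge_ports Eg' wQ uQ.
  have uY := subsetP (H5 Q QF) u uP.
  move: uL; rewrite (lift_in pk sZY uY) => uZ.
  have : u \in ports Q :&: Z by rewrite in_setI uP uZ.
  by rewrite (eqP HQ) in_set0.
have wZ : w \notin Z by rewrite -(lift_in pk sZY wY).
case: (boolP (u \in Y)) => uY.
  left; split.
    by rewrite Eg; apply/subsetP => v; rewrite in_set2 => /orP[]/eqP->.
  rewrite Eg; apply/crossesP; split; [exists u|exists w] => //;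
    rewrite ?in_set2 ?eqxx ?orbT //.
  by rewrite -(lift_in pk sZY uY).
right; have [Q QF uQ] := H3 u uY; exists Q, u, w; do 2!split => //.
by rewrite -(lift_Q pk sZY QF uQ).
Qed.

Lemma lift_card (Y : {set V}) (F : {set {set V}}) (Z : {set V}) :
  pockets Y F -> Z \subset Y ->
  #|cutsetG ends (lift F Z)| <= #|cutsetIn ends Y Z|.
Proof.
move=> pk sZY; have [H1 H2 H3 H4 H5] := pk.
pose phi := fun g : E =>
  if [pick Q in F | ((ends g).1 \in Q) || ((ends g).2 \in Q)] is Some Q
  then qedge Q else inl g.
have Hphi : forall g, g \in cutsetG ends (lift F Z) ->
  (endsG ends g \subset Y /\ crosses Z (endsG ends g) /\ phi g = inl g) \/
  (exists Q u w, ([/\ Q \in F, u \in Q, w \in Y & w \notin Z] /\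
                     endsG ends g = [set u; w] /\ ports Q :&: Z != set0)
                 /\ phi g = qedge Q).
  move=> g gc; case: (lift_cases pk sZY gc) =>
    [[sY cr]|[Q [u [w [[QF uQ wY wZ] [Eg HP]]]]]].
    left; do 2!split => //; rewrite /phi; case: pickP => // Q /andP[QF].
    have e1 : (ends g).1 \in endsG ends g by rewrite in_set2 eqxx.
    have e2 : (ends g).2 \in endsG ends g by rewrite in_set2 eqxx orbT.
    by case/orP => H; have := subsetP (H1 Q QF) _ H;
      rewrite in_setC ?(subsetP sY _ e1) ?(subsetP sY _ e2).
  right; exists Q, u, w; split => //; rewrite /phi; case: pickP => [Q' /andP[Q'F H]|none].
    have e1 : (ends g).1 \in [set u; w] by rewrite -Eg in_set2 eqxx.
    have e2 : (ends g).2 \in [set u; w] by rewrite -Eg in_set2 eqxx orbT.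
    have wQ' : w \notin Q' by have := subsetP (H1 Q' Q'F) w; rewrite in_setC wY; case: (w \in Q') => // ->.
    have uQ' : u \in Q'.
      move: e1 e2 H; rewrite !in_set2 => /orP[]/eqP-> /orP[]/eqP->; rewrite ?orbb //;
        by rewrite (negbTE wQ') ?orbF.
    by rewrite (H2 Q' Q u).
  have := none Q; rewrite QF /=.
  have : u \in endsG ends g by rewrite Eg in_set2 eqxx.
  by rewrite in_set2 => /orP[]/eqP <-; rewrite uQ ?orbT.
have sub : phi @: cutsetG ends (lift F Z) \subset cutsetIn ends Y Z.
  apply/subsetP => f /imsetP[g gc ->].
  case: (Hphi g gc) => [[sY [cr ->]]|[Q [u [w [[[QF uQ wY wZ] [Eg HP]] ->]]]]];
    rewrite in_set.
    by rewrite cr andbT in_set.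
  rewrite (qedge_vsub pk QF) /=; apply/crossesP; split.
    by case/set0Pn: HP => z; rewrite in_setI => /andP[? ?]; exists z.
  have wQ : w \notin Q by have := subsetP (H1 Q QF) w; rewrite in_setC wY; case: (w \in Q) => // ->.
  by exists w => //; case: (edge_ports Eg uQ wQ).
have inj : {in cutsetG ends (lift F Z) &, injective phi}.
  move=> g1 g2 g1c g2c.
  case: (Hphi g1 g1c) => [[_ [_ ->]]|[Q1 [u1 [w1 [[[Q1F u1Q w1Y w1Z] [E1 HP1]] ->]]]]];
  case: (Hphi g2 g2c) => [[_ [_ ->]]|[Q2 [u2 [w2 [[[Q2F u2Q w2Y w2Z] [E2 HP2]] ->]]]]] //.
    by case.
  case=> Hc _.
  have w1Q : w1 \notin Q1 by have := subsetP (H1 Q1 Q1F) w1; rewrite in_setC w1Y; case: (w1 \in Q1) => // ->.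
  have w2Q : w2 \notin Q2 by have := subsetP (H1 Q2 Q2F) w2; rewrite in_setC w2Y; case: (w2 \in Q2) => // ->.
  have [g1Q _] := edge_ports E1 u1Q w1Q.
  have [g2Q _] := edge_ports E2 u2Q w2Q.
  have w1Q2 : w1 \notin Q2 by have := subsetP (H1 Q2 Q2F) w1; rewrite in_setC w1Y; case: (w1 \in Q2) => // ->.
  have : g1 \in cutsetG ends Q2 by rewrite -Hc.
  rewrite in_set => /crossesP[[a]]; rewrite E1 in_set2 => /orP[]/eqP-> aQ2 _; last by rewrite aQ2 in w1Q2.
  have eQ := H2 Q1 Q2 u1 Q1F Q2F u1Q aQ2; subst Q2.
  apply/eqP; apply: contraT => n12.
  have Hcut : cutsetG ends Q1 = [set g1; g2].
    apply/esym/eqP; rewrite eqEcard subUset !sub1set g1Q g2Q H4 // cards2 n12 //.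
  case/set0Pn: HP1 => z; rewrite in_setI => /andP[].
  rewrite in_set in_setC => /andP[zQ /existsP[f /andP[fc zf]]] zZ.
  move: fc zf; rewrite Hcut in_set2 => /orP[]/eqP->; [rewrite E1|rewrite E2];
    rewrite in_set2 => /orP[]/eqP Hz; subst z;
    first [by move: zQ; rewrite ?u1Q ?u2Q | by move: zZ; rewrite ?(negbTE w1Z) ?(negbTE w2Z)].
rewrite -(card_in_imset inj); exact: subset_leq_card sub.
Qed.

Lemma notin_pocket (Y : {set V}) (F : {set {set V}}) (Q : {set V}) (v : V) :
  pockets Y F -> Q \in F -> v \in Y -> v \notin Q.
Proof.
case=> H1 _ _ _ _ QF vY; have := subsetP (H1 Q QF) v.
by rewrite in_setC vY; case: (v \in Q) => // ->.
Qed.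

Lemma pocket_step (X : {set V}) (F : {set {set V}}) (O : {set V}) :
  pockets X F -> O \subset X -> #|cutsetIn ends X O| = 2 ->
  exists F', pockets (X :\: O) F'.
Proof.
move=> pk sOX cO; have [H1 H2 H3 H4 H5] := pk.
pose Oh := lift F O.
exists (Oh |: [set Q in F | ports Q :&: O == set0]).
have OhX : forall v, v \in X -> (v \in Oh) = (v \in O) by move=> v; apply: lift_in.
have OOh : O \subset Oh by apply/subsetP => v vO; rewrite in_set vO.
have oldP : forall Q, Q \in [set Q in F | ports Q :&: O == set0] ->
    Q \in F /\ ports Q :&: O == set0 by move=> Q; rewrite in_set => /andP.
have OhQ : forall Q v, Q \in F -> ports Q :&: O == set0 -> v \in Q -> v \notin Oh.
  by move=> Q v QF HQ vQ; rewrite (lift_Q pk sOX QF vQ) HQ.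
split.
- move=> Q; rewrite in_setU1 => /orP[/eqP->|/oldP[QF _]].
    apply/subsetP => v vOh; rewrite !in_setC in_setD negb_and negbK.
    case: (boolP (v \in X)) => vX; last by rewrite orbT.
    by rewrite orbF -(OhX v vX).
  apply: subset_trans (H1 Q QF) _; apply/subsetP => v.
  by rewrite !in_setC in_setD negb_and => ->; rewrite orbT.
- move=> Q Q' v; rewrite !in_setU1 => /orP[/eqP->|/oldP[QF HQ]] /orP[/eqP->|/oldP[Q'F HQ']] // vQ vQ'.
  + by have := OhQ _ _ Q'F HQ' vQ'; rewrite vQ.
  + by have := OhQ _ _ QF HQ vQ; rewrite vQ'.
  + exact: H2 vQ vQ'.
- move=> v; rewrite in_setD negb_and negbK => /orP[vO|vX].
    by exists Oh; rewrite ?in_setU1 ?eqxx // (subsetP OOh).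
  have [Q QF vQ] := H3 v vX.
  case: (boolP (ports Q :&: O == set0)) => HQ.
    by exists Q => //; rewrite in_setU1 in_set QF HQ orbT.
  by exists Oh; rewrite ?in_setU1 ?eqxx // (lift_Q pk sOX QF vQ).
- move=> Q; rewrite in_setU1 => /orP[/eqP->|/oldP[QF _]]; last exact: H4.
  have : 0 < #|cutsetIn ends X O| by rewrite cO.
  case/card_gt0P => f; rewrite in_set => /andP[fv /crossesP[[o oA oO] [b bA bO]]].
  have bX := subsetP (vsub_endset fv) b bA.
  have Hle : #|cutsetG ends Oh| <= 2 by rewrite -cO; exact: lift_card.
  apply/eqP; rewrite eqn_leq Hle /=.
  rewrite ltnNge; apply/negP => H.
  apply: (tec (z := o) (b := b) _ _ H); first exact: (subsetP OOh).
  by rewrite OhX.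
- move=> Q; rewrite in_setU1 => /orP[/eqP->|/oldP[QF HQ]].
    apply/subsetP => v; rewrite in_set in_setC => /andP[vOh /existsP[g /andP[gc vg]]].
    case: (lift_cases pk sOX gc) => [[sY _]|[Q0 [u [w [[Q0F uQ wY wO] [Eg HP]]]]]].
      have vX := subsetP sY v vg.
      by rewrite in_setD vX andbT -(OhX v vX).
    have uOh : u \in Oh by rewrite /Oh (lift_Q pk sOX Q0F uQ).
    move: vg; rewrite Eg in_set2 => /orP[]/eqP Hv; subst v; first by rewrite uOh in vOh.
    by rewrite in_setD wY wO.
  apply/subsetP => v vP; rewrite in_setD (subsetP (H5 Q QF) v vP) andbT.
  apply/negP => vO; have : v \in ports Q :&: O by rewrite in_setI vP vO.
  by rewrite (eqP HQ) in_set0.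
Qed.

Lemma cutsetIn_compl (X U : {set V}) : U \subset X ->
  cutsetIn ends X (X :\: U) = cutsetIn ends X U.
Proof.
move=> sUX; apply/setP => f; rewrite [in LHS]in_set [in RHS]in_set.
case fv: (f \in vsub ends X) => //=.
have sf := vsub_endset fv.
apply/crossesP/crossesP => [[[v vA vXU] [w wA wXU]]|[[v vA vU] [w wA wU]]]; split.
- exists w => //; move: wXU; rewrite in_setD (subsetP sf w wA) andbT.
  by case: (w \in U).
- by exists v => //; move: vXU; rewrite in_setD => /andP[].
- by exists w => //; rewrite in_setD wU (subsetP sf w wA).
- by exists v => //; rewrite in_setD vU.
Qed.

Lemma setDDK (X U : {set V}) : U \subset X -> X :\: (X :\: U) = U.
Proof.
move=> sUX; apply/setP => v; rewrite !in_setD negb_and negbK.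
case: (boolP (v \in U)) => vU /=; first by rewrite (subsetP sUX v vU).
by case: (v \in X).
Qed.

Lemma core_pockets (p : Edge V E) (X Y : {set V}) : core_of ends p X Y ->
  forall F, pockets X F -> p \in vsub ends X -> endset ends p \subset X ->
  exists F', [/\ pockets Y F', p \in vsub ends Y & endset ends p \subset Y].
Proof.
elim => [X0 _|X0 U Y0 sUX cU npU _ IH] F pk pX sp; first by exists F.
move: IH; case: ifP => Hs IH.
  have cU' : #|cutsetIn ends X0 (X0 :\: U)| = 2 by rewrite cutsetIn_compl.
  have [F' pk'] := pocket_step pk (subsetDl X0 U) cU'.
  rewrite setDDK // in pk'.
  exact: IH F' pk' (vsub_sub sUX pX Hs) Hs.
have [F' pk'] := pocket_step pk sUX cU.
have sp' : endset ends p \subset X0 :\: U.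
  apply/subsetP => v vp; rewrite in_setD (subsetP sp v vp) andbT.
  apply/negP => vU.
  case/subsetPn: (negbT Hs) => w wp wU.
  move: npU; rewrite in_set pX /=; apply/negP; rewrite negbK.
  by apply/crossesP; split; [exists v|exists w].
exact: IH F' pk' (vsub_sub (subsetDl _ _) pX sp') sp'.
Qed.

Lemma main (X Y : {set V}) (p e : Edge V E) (x : V) :
  peninsula ends X -> internal_port ends X p ->
  core_of ends p X Y ->
  e \in vsub ends Y -> e != p ->
  x \in endset ends p ->
  exists (vs : seq V) (es : seq (Edge V E)),
    [/\ is_path ends Y vs es, head x vs = x, p \notin es,
        es != [::] & last e es = e].
Proof.
move=> Hpen Hip Hcore eY nep xp.
have pX : p \in vsub ends X.
  by move: Hip; rewrite /internal_port; case: ifP => _ //; case.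
have [F0 pk0] : exists F, pockets X F.
  case/orP: Hpen => [tc|/eqP ->].
    exists [set ~: X]; split.
    - by move=> Q; rewrite in_set1 => /eqP->.
    - by move=> Q Q' v; rewrite !in_set1 => /eqP-> /eqP->.
    - by move=> v vX; exists (~: X); rewrite ?in_set1 ?in_setC.
    - by move=> Q; rewrite in_set1 => /eqP->; rewrite cutsetG_compl; apply/eqP.
    - move=> Q; rewrite in_set1 => /eqP->; apply/subsetP => v.
      by rewrite /ports in_set in_setC in_setC negbK => /andP[].
  exists set0; split; by [move=> Q; rewrite in_set0 | move=> Q Q2 v; rewrite in_set0 | move=> v; rewrite in_setT].
have [F [pk pY spY]] := core_pockets Hcore pk0 pX (vsub_endset pX).
have xY : x \in Y := subsetP spY x xp.
have [u0 [v0 [nuv Ee]]] := vsub_pair eY.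
pose ok f u v := [&& f \in vsub ends Y, f != p, f != e & endset ends f == [set u; v]].
pose adj : rel V := fun u v => (u != v) && [exists f, ok f u v].
pose Z := [set v in Y | connect adj x v].
have hit : (u0 \in Z) || (v0 \in Z).
  case: (boolP ((u0 \in Z) || (v0 \in Z))) => // /norP[u0Z v0Z]; exfalso.
  have sZY : Z \subset Y by apply/subsetP => v; rewrite in_set => /andP[].
  have xZ : x \in Z by rewrite in_set xY connect0.
  have u0Y : u0 \in Y by apply: (subsetP (vsub_endset eY)); rewrite Ee in_set2 eqxx.
  have cut1 : cutsetIn ends Y Z \subset [set p].
    apply/subsetP => f; rewrite in_set => /andP[fv /crossesP[[c cA cZ] [d dA dZ]]].
    rewrite in_set1; apply: contraT => nfp.
    case: (eqVneq f e) => [fe|nfe].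
      by move: cA; rewrite fe Ee in_set2 => /orP[]/eqP Hc; subst c;
        [rewrite cZ in u0Z|rewrite cZ in v0Z].
    have ncd : c != d by apply: contraNneq dZ => <-.
    have [a [b [nab Ef]]] := vsub_pair fv.
    have Ef' : endset ends f = [set c; d].
      by rewrite Ef (pair2 ncd) // -Ef.
    have adjcd : adj c d.
      by rewrite /adj ncd /=; apply/existsP; exists f; rewrite /ok fv nfp nfe Ef' eqxx.
    move: (cZ); rewrite in_set => /andP[_ xc].
    have dY := subsetP (vsub_endset fv) d dA.
    by move: dZ; rewrite in_set dY (connect_trans xc (connect1 adjcd)).
  have c1 : #|cutsetIn ends Y Z| <= 1 by rewrite -(cards1 p); exact: subset_leq_card cut1.
  apply: (tec (z := x) (b := u0) _ _ (leq_trans (lift_card pk sZY) c1)).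
    by rewrite in_set xZ.
  by rewrite (lift_in pk sZY u0Y).
have [t tT xt] : exists2 t, t \in [set u0; v0] & connect adj x t.
  case/orP: hit; rewrite in_set => /andP[_ H]; [exists u0|exists v0] => //;
    by rewrite in_set2 eqxx ?orbT.
have [t' t'T ct'] := first_hit xt tT.
case/connectP: ct' => s0 ps0.
move=> lt0; move: lt0; case/shortenP: ps0 => s ps us _ lt.
pose w := if t' == u0 then v0 else u0.
have [Eet nt'w wT] : [/\ endset ends e = [set t'; w], t' != w & w \in [set u0; v0]].
  rewrite /w; move: t'T; rewrite in_set2 => /orP[]/eqP->; rewrite ?eqxx.
    by rewrite Ee nuv in_set2 eqxx orbT.
  have nvu : (v0 == u0) = false by rewrite eq_sym (negbTE nuv).
  rewrite nvu Ee setUC eq_sym nuv in_set2 eqxx; rewrite orbT; split => //.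
have wn : w \notin x :: s.
  rewrite lastI -lt mem_rcons in_cons eq_sym (negbTE nt'w) /=.
  by apply/negP => /(belast_notin ps) /negP; apply.
pose eo u v := odflt e [pick f | ok f u v].
have eo_ok : forall u v, adj u v -> ok (eo u v) u v.
  move=> u v /andP[_ /existsP[f fok]]; rewrite /eo; case: pickP => [f' //|none].
  by rewrite none in fok.
have stp : forall v1 i, i < size s ->
    ok (eo (nth v1 (x :: s) i) (nth v1 s i)) (nth v1 (x :: s) i) (nth v1 s i).
  move=> v1 i lti; apply: eo_ok.
  by have := (pathP v1 ps) i lti => /andP[].
exists (rcons (x :: s) w), (rcons (pairmap eo x s) e); split => //.
- split.
  + by rewrite !size_rcons size_pairmap.
  + by rewrite rcons_uniq wn us.
  + rewrite all_rcons eY /=; apply/(all_nthP e) => i; rewrite size_pairmap => lti.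
    rewrite (nth_pairmap x e eo lti x).
    by case/and4P: (stp x i lti).
  + move=> v1 f0 i; rewrite size_rcons size_pairmap ltnS => lei.
    rewrite nth_rcons size_pairmap.
    case: (ltngtP i (size s)) lei => [lti _|gti|eqi _]; last first.
    * rewrite eqi !nth_rcons /= ltnSn ltnn eqxx Eet.
      congr [set _; _]; have := nth_last v1 (x :: s); rewrite /= => ->.
      by rewrite lt.
    * by [].
    rewrite (nth_pairmap v1 f0 eo lti x) !nth_rcons /= ltnS (ltnW lti) ltnS lti.
    by case/and4P: (stp v1 i lti) => _ _ _ /eqP.
- rewrite mem_rcons in_cons eq_sym (negbTE nep) /=.
  apply/negP => /(nthP e) [i]; rewrite size_pairmap => lti.
  rewrite (nth_pairmap x e eo lti x) => Hp.
  by case/and4P: (stp x i lti); rewrite Hp eqxx.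
- by rewrite -size_eq0 size_rcons.
- by rewrite last_rcons.
Qed.

End S.

Theorem lemma20 (V E : finType) (ends : E -> V * V) (X Y : {set V})
    (p e : Edge V E) (x : V) :
  loopless ends -> cubic ends -> two_connected ends ->
  peninsula ends X -> internal_port ends X p ->
  core_of ends p X Y ->
  e \in vsub ends Y -> e != p ->
  x \in endset ends p ->
  exists (vs : seq V) (es : seq (Edge V E)),
    [/\ is_path ends Y vs es, head x vs = x, p \notin es,
        es != [::] & last e es = e].
Proof.
move=> Hl Hc H2; exact: main.
Qed.
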